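(* Let $(X,o,\mu)$ be a boundedly-compact pmm space. (i) The curve $t\mapsto\overline B_t(o)$, $t\ge0$, is càdlàg with respect to the Hausdorff metric on closed subsets of $X$, and its left limit at $t=r>0$ is the closure of $B_r(o)$. (ii) The curve $t\mapsto\mu|_{\overline B_t(o)}$ is càdlàg with respect to the Prokhorov metric, and its left limit at $t=r>0$ is $\mu|_{B_r(o)}$.
   Context: A pmm space is $(X,o,\mu)$ with $X$ a metric space, $o\in X$, $\mu$ a nonnegative Borel measure; it is boundedly compact if every closed ball $\overline B_r(x)=\{y:d(x,y)\le r\}$ is compact and has finite $\mu$-measure. Open ball $B_r(x)=\{y:d(x,y)<r\}$. Hausdorff distance: $d_H(A,B)=\inf\{\epsilon\ge0:A\subseteq B^\epsilon,B\subseteq A^\epsilon\}$, $A^\epsilon=\{z:\exists a\in A, d(z,a)\le\epsilon\}$. Prokhorov distance: $d_P(\mu,\nu)=\inf\{\epsilon>0:\mu(A)\le\nu(A^\epsilon)+\epsilon,\ \nu(A)\le\mu(A^\epsilon)+\epsilon\ \forall A\text{ closed}\}$. *)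

(* Defs.v *)
From mathcomp Require Import all_boot all_order all_algebra.
From mathcomp Require Import all_classical all_reals all_analysis.
Set Implicit Arguments. Unset Strict Implicit. Unset Printing Implicit Defensive.
Import Order.TTheory GRing.Theory Num.Theory.
Local Open Scope classical_set_scope.
Local Open Scope ring_scope.

Section MetricDefs.
Context {R : realType} {X : Type} (d : X -> X -> R).

Definition is_metric : Prop :=
  (forall x y, 0 <= d x y) /\
  (forall x y, d x y = 0 <-> x = y) /\
  (forall x y, d x y = d y x) /\
  (forall x y z, d x z <= d x y + d y z).

Definition oball (x : X) (r : R) : set X := [set y | d x y < r].
Definition cball (x : X) (r : R) : set X := [set y | d x y <= r].

Definition dopen (U : set X) : Prop :=
  forall x, U x -> exists2 e : R, 0 < e & oball x e `<=` U.

Definition dclosure (A : set X) : set X :=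
  [set x | forall e : R, 0 < e -> exists2 a, A a & d x a < e].

Definition dclosed (A : set X) : Prop := dclosure A `<=` A.

Definition dcompact (K : set X) : Prop :=
  forall (I : Type) (U : I -> set X), (forall i, dopen (U i)) ->
    K `<=` \bigcup_i U i ->
    exists F : set I, finite_set F /\ K `<=` \bigcup_(i in F) U i.

Definition thick (A : set X) (e : R) : set X :=
  [set z | exists2 a, A a & d z a <= e].

(* Hausdorff distance (extended-real valued; +oo if no admissible eps) *)
Definition hausdorff_dist (A B : set X) : \bar R :=
  ereal_inf [set e%:E | e in
    [set e : R | 0 <= e /\ A `<=` thick B e /\ B `<=` thick A e]].

Definition prokhorov_dist (mu nu : set X -> \bar R) : \bar R :=
  ereal_inf [set e%:E | e in
    [set e : R | 0 < e /\ forall A, dclosed A ->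
        (mu A <= nu (thick A e) + e%:E)%E /\ (nu A <= mu (thick A e) + e%:E)%E]].

End MetricDefs.

Definition restr {X : Type} {R : realType} (mu : set X -> \bar R) (S : set X)
  : set X -> \bar R := fun A => mu (A `&` S).

(* Main.v *)
Require Import Defs.
From mathcomp Require Import all_boot all_order all_algebra.
From mathcomp Require Import all_classical all_reals all_analysis.
From mathcomp Require Import lra.
Import Order.TTheory GRing.Theory Num.Theory.
Set Implicit Arguments. Unset Strict Implicit.
Local Open Scope classical_set_scope.
Local Open Scope ring_scope.

Section Aux.
Variable R : realType.
Definition dlt (n : nat) : R := (n.+1%:R)^-1.

Lemma dlt_gt0 n : 0 < dlt n.
Proof. by rewrite /dlt invr_gt0 ltr0Sn. Qed.

Lemma dlt_le1 n : dlt n <= 1.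
Proof. by rewrite /dlt invf_le1 ?ltr0Sn // ler1n. Qed.

Lemma dlt_mono n m : (n <= m)%N -> dlt m <= dlt n.
Proof.
move=> nm; rewrite /dlt lef_pV2 ?posrE ?ltr0Sn // ler_nat ltnS //.
Qed.

Lemma dlt_small (c : R) : 0 < c -> exists n, dlt n < c.
Proof.
move=> c0; have ci : 0 <= c^-1 by rewrite invr_ge0 ltW.
have := archi_boundP ci.
set m := Num.Def.archi_bound _ => hm.
exists m; rewrite /dlt -div1r ltr_pdivrMr ?ltr0Sn //.
rewrite -div1r ltr_pdivrMr // in hm.
apply: (lt_le_trans hm); rewrite [c * _]mulrC ler_pM2r // ler_nat; exact: leqnSn.
Qed.

Section Met.
Variables (X : Type) (d : X -> X -> R) (hd : is_metric d).

Lemma d_ge0 x y : 0 <= d x y. Proof. by case: hd. Qed.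
Lemma d_xx x : d x x = 0. Proof. by case: hd => _ [h _]; apply/h. Qed.
Lemma d_sym x y : d x y = d y x. Proof. by case: hd => _ [_ [h _]]. Qed.
Lemma d_tri x y z : d x z <= d x y + d y z. Proof. by case: hd => _ [_ [_ h]]. Qed.

Lemma compact_nested (K : set X) (U : nat -> set X) : dcompact d K ->
  (forall n, dopen d (U n)) -> (forall n m, (n <= m)%N -> U n `<=` U m) ->
  K `<=` \bigcup_n U n -> exists N, K `<=` U N.
Proof.
move=> cK oU mU KU; have [F [fF KF]] := cK nat U oU KU.
have [S FS] := finite_fsetP.1 fF.
exists (\max_(i <- finmap.enum_fset S) i)%N => x /KF [i Fi Uix].
apply: (mU i) => //; rewrite FS /= in Fi.
exact: (@leq_bigmax_seq _ _ xpredT (fun j => j) i Fi isT).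
Qed.

Lemma dopen_setU (A B : set X) : dopen d A -> dopen d B -> dopen d (A `|` B).
Proof.
move=> oA oB x [/oA [e e0 h]|/oB [e e0 h]]; exists e => // y /h; by [left|right].
Qed.

Lemma dopen_gt (z : X) (c : R) : dopen d [set x | c < d z x].
Proof.
move=> x /= cx; exists (d z x - c); first by rewrite subr_gt0.
move=> y; rewrite /oball /= => hy.
have := d_tri z y x; rewrite (d_sym y x); lra.
Qed.

Lemma dopen_oball (z : X) (c : R) : dopen d (oball d z c).
Proof.
move=> x; rewrite /oball /= => cx; exists (c - d z x); first by rewrite subr_gt0.
move=> y; rewrite /oball /= => hy.
have := d_tri z x y; lra.
Qed.

Lemma dopen_near (A : set X) (e : R) : dopen d [set x | exists2 a, A a & d x a < e].
Proof.
move=> x /= [a Aa xa]; exists (e - d x a); first by rewrite subr_gt0.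
move=> y; rewrite /oball /= => hy; exists a => //.
have := d_tri y x a; rewrite (d_sym y x); lra.
Qed.

Lemma dopen_ncl (A : set X) : dopen d (~` dclosure d A).
Proof.
move=> x; rewrite /dclosure /= => /existsNP [e /not_implyP [e0 he]].
exists (e / 2); first by rewrite divr_gt0.
move=> y; rewrite /oball /= => hy hcl.
have [a Aa ya] := hcl (e / 2) (divr_gt0 e0 (ltr0Sn _ 1)).
apply: he; exists a => //; have := d_tri x y a; lra.
Qed.

Lemma sub_dclosure (A : set X) : A `<=` dclosure d A.
Proof. by move=> x Ax e e0; exists x => //; rewrite d_xx. Qed.

Lemma dclosed_open (A : set X) : dclosed d A -> dopen d (~` A).
Proof.
move=> cA; have -> : ~` A = ~` dclosure d A.
  by apply/seteqP; split => x /= h1 h2; apply: h1; [apply: cA|apply: sub_dclosure].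
exact: dopen_ncl.
Qed.

Lemma dclosed_cball z c : dclosed d (cball d z c).
Proof.
move=> x hx; rewrite /cball /=; apply/ler_addgt0Pr => e e0.
have [a ha xa] := hx e e0; move: ha; rewrite /cball /= => ha.
have := d_tri z a x; rewrite (d_sym a x); lra.
Qed.

Lemma dclosure_oball z c : dclosure d (oball d z c) `<=` cball d z c.
Proof.
move=> x hx; apply: dclosed_cball => e /hx [a ha xa]; exists a => //.
by move: ha; rewrite /oball /cball /=; apply: ltW.
Qed.


Lemma dlt_cover (K : set X) (P : set X) (f : X -> R) (c : R) :
  (forall x, K x -> P x \/ c < f x) ->
  K `<=` \bigcup_n (P `|` [set x | c + dlt n < f x]).
Proof.
move=> h x /h [Px|cx]; first by exists 0%N => //; left.
have cx0 : 0 < f x - c by rewrite subr_gt0.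
have [n hn] := dlt_small cx0.
exists n => //; right => /=; lra.
Qed.

Lemma dlt_nested (P : set X) (f : X -> R) (c : R) n m : (n <= m)%N ->
  (P `|` [set x | c + dlt n < f x]) `<=` (P `|` [set x | c + dlt m < f x]).
Proof.
move=> nm x [Px|/= hx]; [by left|right => /=].
have := dlt_mono nm; lra.
Qed.

Lemma thick_closed (hc : forall x r, dcompact d (cball d x r)) (A : set X) (e : R) :
  dclosed d A -> dclosed d (thick d A e).
Proof.
move=> cA z hz; case: (pselect (thick d A e z)) => // hn; exfalso.
have hA : forall a, A a -> e < d z a.
  by move=> a Aa; rewrite ltNge; apply/negP => h; apply: hn; exists a.
pose U := fun n => ~` A `|` [set x | e + dlt n < d z x].
have oU : forall n, dopen d (U n).
  move=> n; apply: dopen_setU; [exact: dclosed_open|exact: dopen_gt].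
have mU : forall n m, (n <= m)%N -> U n `<=` U m by move=> n m nm; apply: dlt_nested.
have cU : cball d z (e + 1) `<=` \bigcup_n U n.
  apply: dlt_cover => x _; have [Ax|nAx] := pselect (A x); last by left.
  by right; apply: hA.
have [N KN] := compact_nested (hc z (e + 1)) oU mU cU.
have [y [a Aa ya] zy] := hz (dlt N) (dlt_gt0 N).
have zaK : cball d z (e + 1) a.
  rewrite /cball /=; have := d_tri z y a; have := dlt_le1 N; lra.
case: (KN a zaK) => [//|/=]; have := d_tri z y a; lra.
Qed.

Lemma hausdorff_le (A B : set X) (e : R) : 0 <= e ->
  A `<=` thick d B e -> B `<=` thick d A e -> (hausdorff_dist d A B <= e%:E)%E.
Proof. by move=> e0 h1 h2; apply: ereal_inf_lbound; exists e. Qed.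

Lemma prokhorov_le (mu nu : set X -> \bar R) (e : R) : 0 < e ->
  (forall A, dclosed d A -> (mu A <= nu (thick d A e) + e%:E)%E /\
                            (nu A <= mu (thick d A e) + e%:E)%E) ->
  (prokhorov_dist d mu nu <= e%:E)%E.
Proof. by move=> e0 h; apply: ereal_inf_lbound; exists e. Qed.

End Met.
End Aux.

Section Meas.
Variables (R : realType) (disp : measure_display) (X : measurableType disp)
  (d : X -> X -> R) (hd : is_metric d)
  (hBorel : (@measurable disp X) = <<s dopen d >>)
  (mu : {measure set X -> \bar R}).

Lemma open_meas U : dopen d U -> measurable U.
Proof. by rewrite hBorel; apply: sub_sigma_algebra. Qed.

Lemma closed_meas A : dclosed d A -> measurable A.
Proof. by move=> cA; rewrite -(setCK A); apply/measurableC/open_meas/dclosed_open. Qed.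

Lemma prok_half (A S T D : set X) (e : R) : 0 <= e -> measurable S -> measurable T ->
  measurable D -> dclosed d A -> measurable (thick d A e) -> S `<=` T `|` D ->
  (mu D <= e%:E)%E -> (restr mu S A <= restr mu T (thick d A e) + e%:E)%E.
Proof.
move=> e0 mS mT mD cA mth STD muD; rewrite /restr.
have mA := closed_meas cA.
apply: (@le_trans _ _ (mu ((thick d A e `&` T) `|` D))).
  apply: le_measure; rewrite ?inE.
  - exact: measurableI.
  - by apply: measurableU => //; exact: measurableI.
  - move=> x [Ax /STD [Tx|Dx]]; last by right.
    by left; split => //; exists x => //; rewrite d_xx.
apply: (le_trans (measureU2 _ _ _)); [exact: measurableI|done|].
by apply: leeD.
Qed.

Lemma mu_cont (F : nat -> set X) : (forall n, measurable (F n)) ->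
  (forall n m, (n <= m)%N -> F m `<=` F n) -> (mu (F 0%N) < +oo)%E ->
  \bigcap_n F n = set0 -> forall e : R, 0 < e -> exists N, (mu (F N) < e%:E)%E.
Proof.
move=> mF hF hF0 hcap e e0.
have := nonincreasing_cvg_mu hF0 mF _ _.
rewrite hcap measure0.
move=> /(_ measurable0 _) h.
have hm : {homo F : n m / (n <= m)%N >-> (m <= n)%O}.
  by move=> n m nm; apply/subsetPset; apply: hF.
have [N _ hN] := h hm _ (@nbhs_open_ereal_lt R 0 (fun=> e) e0).
by exists N; apply: (hN N) => /=.
Qed.
End Meas.

Unset Implicit Arguments.

Theorem lemma3p2 (R : realType) (disp : measure_display) (X : measurableType disp)
  (d : X -> X -> R) (o : X) (mu : {measure set X -> \bar R})
  (hd : is_metric d)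
  (hBorel : (@measurable disp X) = <<s dopen d >>)
  (hbc : forall (x : X) (r : R),
      dcompact d (cball d x r) /\ (mu (cball d x r) < +oo)%E) :
  (* (i) Hausdorff: right-continuity and left limits *)
  ((forall t : R, 0 <= t -> forall eps : R, 0 < eps ->
      exists2 delta : R, 0 < delta & forall s : R, t <= s < t + delta ->
        (hausdorff_dist d (cball d o s) (cball d o t) <= eps%:E)%E) /\
   (forall r : R, 0 < r -> forall eps : R, 0 < eps ->
      exists2 delta : R, 0 < delta & forall s : R, 0 <= s -> r - delta < s < r ->
        (hausdorff_dist d (cball d o s) (dclosure d (oball d o r)) <= eps%:E)%E)) /\
  (* (ii) Prokhorov: right-continuity and left limits *)
  ((forall t : R, 0 <= t -> forall eps : R, 0 < eps ->
      exists2 delta : R, 0 < delta & forall s : R, t <= s < t + delta ->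
        (prokhorov_dist d (restr mu (cball d o s)) (restr mu (cball d o t)) <= eps%:E)%E) /\
   (forall r : R, 0 < r -> forall eps : R, 0 < eps ->
      exists2 delta : R, 0 < delta & forall s : R, 0 <= s -> r - delta < s < r ->
        (prokhorov_dist d (restr mu (cball d o s)) (restr mu (oball d o r)) <= eps%:E)%E)).
Proof.
have hc : forall x r, dcompact d (cball d x r) by move=> x r; case: (hbc x r).
have cm : forall x r, measurable (cball d x r).
  by move=> x r; apply: (closed_meas hd hBorel); exact: dclosed_cball.
have om : forall x r, measurable (oball d x r).
  by move=> x r; apply: (open_meas hBorel); exact: dopen_oball.
have thm : forall A e, dclosed d A -> measurable (thick d A e).
  by move=> A e cA; apply: (closed_meas hd hBorel); apply: thick_closed.
split; split.
- move=> t t0 eps eps0.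
  pose U n := [set x | exists2 a, cball d o t a & d x a < eps] `|` [set x | t + dlt R n < d o x].
  have oU : forall n, dopen d (U n).
    by move=> n; apply: dopen_setU; [exact: dopen_near|exact: dopen_gt].
  have mU : forall n m, (n <= m)%N -> U n `<=` U m by move=> n m nm; apply: dlt_nested.
  have cU : cball d o (t + 1) `<=` \bigcup_n U n.
    apply: dlt_cover => x _; case: (leP (d o x) t) => h; last by right.
    by left; exists x => //; rewrite d_xx.
  have [N KN] := compact_nested (hc o (t + 1)) oU mU cU.
  exists (dlt R N); first exact: dlt_gt0.
  move=> s /andP [ts sN]; apply: hausdorff_le => //; first exact: ltW.
  + move=> x hx; have Kx : cball d o (t + 1) x.
      by move: hx; rewrite /cball /=; have := dlt_le1 R N; lra.
    case: (KN x Kx) => [[a ha hxa]|/= h]; first by exists a => //; exact: ltW.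
    by move: hx; rewrite /cball /=; lra.
  + move=> x hx; exists x; last by rewrite d_xx // ltW.
    by move: hx; rewrite /cball /=; lra.
- move=> r r0 eps eps0.
  pose U n := ~` dclosure d (oball d o r) `|`
     [set x | exists2 a, oball d o (r - dlt R n) a & d x a < eps].
  have oU : forall n, dopen d (U n).
    by move=> n; apply: dopen_setU; [exact: dopen_ncl|exact: dopen_near].
  have mU : forall n m, (n <= m)%N -> U n `<=` U m.
    move=> n m nm x [h|[a ha hxa]]; [by left|right; exists a => //].
    by move: ha; rewrite /oball /=; have := dlt_mono R nm; lra.
  have cU : cball d o r `<=` \bigcup_n U n.
    move=> x _; case: (pselect (dclosure d (oball d o r) x)) => hx; last by exists 0%N => //; left.
    have [a ha hxa] := hx eps eps0.
    have ra : 0 < r - d o a by move: ha; rewrite /oball /=; lra.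
    have [n hn] := dlt_small ra.
    by exists n => //; right; exists a => //; rewrite /oball /=; lra.
  have [N KN] := compact_nested (hc o r) oU mU cU.
  exists (dlt R N); first exact: dlt_gt0.
  move=> s s0 /andP [h1 h2]; apply: hausdorff_le => //; first exact: ltW.
  + move=> x hx; exists x; last by rewrite d_xx // ltW.
    by apply: sub_dclosure => //; move: hx; rewrite /cball /oball /=; lra.
  + move=> x hx; have Kx := dclosure_oball hd hx.
    case: (KN x Kx) => [//|[a ha hxa]]; exists a; last exact: ltW.
    by move: ha; rewrite /oball /cball /=; lra.
- move=> t t0 eps eps0.
  pose F n := cball d o (t + dlt R n) `\` cball d o t.
  have mF : forall n, measurable (F n) by move=> n; apply: measurableD.
  have hF : forall n m, (n <= m)%N -> F m `<=` F n.
    move=> n m nm x [h1 h2]; split => //; move: h1; rewrite /cball /=.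
    by have := dlt_mono R nm; lra.
  have hF0 : (mu (F 0%N) < +oo)%E.
    apply: (le_lt_trans _ (hbc o (t + dlt R 0)).2).
    by apply: le_measure; rewrite ?inE //; move=> x [].
  have hcap : \bigcap_n F n = set0.
    apply/seteqP; split => // x hx.
    have [_ h0] := hx 0%N I.
    have tx : 0 < d o x - t by move: h0; rewrite /cball /=; lra.
    have [n hn] := dlt_small tx.
    have [h1 _] := hx n I; move: h1; rewrite /cball /=; lra.
  have [N hN] := mu_cont mF hF hF0 hcap eps0.
  exists (dlt R N); first exact: dlt_gt0.
  move=> s /andP [ts sN]; apply: prokhorov_le => // A cA; split.
  + apply: (@prok_half _ _ _ _ hd hBorel mu A _ _ (cball d o s `\` cball d o t)) => //.
    * exact: ltW.
    * exact: measurableD.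
    * exact: thm.
    * by move=> x hx; case: (pselect (cball d o t x)) => h; [left|right].
    * apply: (le_trans _ (ltW hN)); apply: le_measure; rewrite ?inE //.
        exact: measurableD.
      by move=> x [h1 h2]; split => //; move: h1; rewrite /cball /=; lra.
  + apply: (@prok_half _ _ _ _ hd hBorel mu A _ _ set0) => //.
    * exact: ltW.
    * exact: thm.
    * by move=> x hx; left; move: hx; rewrite /cball /=; lra.
    * by rewrite measure0 lee_fin ltW.
- move=> r r0 eps eps0.
  pose F n := oball d o r `\` cball d o (r - dlt R n).
  have mF : forall n, measurable (F n) by move=> n; apply: measurableD.
  have hF : forall n m, (n <= m)%N -> F m `<=` F n.
    move=> n m nm x [h1 h2]; split => //; move: h2; rewrite /cball /=.
    by have := dlt_mono R nm; lra.
  have hF0 : (mu (F 0%N) < +oo)%E.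
    apply: (le_lt_trans _ (hbc o r).2).
    apply: le_measure; rewrite ?inE //.
    by move=> x [h _]; move: h; rewrite /oball /cball /=; lra.
  have hcap : \bigcap_n F n = set0.
    apply/seteqP; split => // x hx.
    have [h0 _] := hx 0%N I.
    have tx : 0 < r - d o x by move: h0; rewrite /oball /=; lra.
    have [n hn] := dlt_small tx.
    have [_ h1] := hx n I; move: h1; rewrite /cball /=; lra.
  have [N hN] := mu_cont mF hF hF0 hcap eps0.
  exists (dlt R N); first exact: dlt_gt0.
  move=> s s0 /andP [h1 h2]; apply: prokhorov_le => // A cA; split.
  + apply: (@prok_half _ _ _ _ hd hBorel mu A _ _ set0) => //.
    * exact: ltW.
    * exact: thm.
    * by move=> x hx; left; move: hx; rewrite /cball /oball /=; lra.
    * by rewrite measure0 lee_fin ltW.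
  + apply: (@prok_half _ _ _ _ hd hBorel mu A _ _ (oball d o r `\` cball d o s)) => //.
    * exact: ltW.
    * exact: measurableD.
    * exact: thm.
    * by move=> x hx; case: (pselect (cball d o s x)) => h; [left|right].
    * apply: (le_trans _ (ltW hN)); apply: le_measure; rewrite ?inE //.
        exact: measurableD.
      by move=> x [hx1 hx2]; split => //; move: hx2; rewrite /cball /=; lra.
Qed.
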